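(* Let $s,k$ be positive integers and $\epsilon\in(0,1)$. Then for all sufficiently large $n$ there exist sets $A,B\subseteq\mathbb{Z}$ with $|A|=|B|=n$ and $|A+B|>kn$ such that for every subset $B_{(s)}\subseteq B$ with $|B_{(s)}|\le s$ we have $|A+B_{(s)}|\le(2+\epsilon)n$.
   Context: For subsets $X,Y$ of an abelian group, $X+Y=\{x+y:x\in X,y\in Y\}$. *)

(* Defs.v *)
From HB Require Import structures.
From mathcomp Require Import all_boot all_order all_algebra.
From mathcomp Require Import finmap.
From mathcomp Require Import reals.
Set Implicit Arguments. Unset Strict Implicit. Unset Printing Implicit Defensive.
Import Order.TTheory GRing.Theory Num.Theory.
Local Open Scope fset_scope.

Definition sumset (X Y : {fset int}) : {fset int} :=
  [fset (x + y)%R | x in X, y in Y].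

(* Main.v *)
Require Import Defs.
From HB Require Import structures.
From mathcomp Require Import all_boot all_order all_algebra.
From mathcomp Require Import finmap.
From mathcomp Require Import reals.
From mathcomp Require Import zify.
From Stdlib Require Import Lia.
Import Order.TTheory GRing.Theory Num.Theory.
Local Open Scope fset_scope.

Lemma card_sumset_le (X Y : {fset int}) : (#|` sumset X Y| <= #|` X| * #|` Y|)%N.
Proof.
rewrite /sumset unlock /= size_seq_fset (leq_trans (size_undup _)) //.
by rewrite size_allpairs.
Qed.

Definition Iv (m : nat) : {fset int} := [fset Posz (nat_of_ord i) | i : 'I_m].
Definition Xs (n t : nat) : {fset int} := [fset Posz ((3 * (nat_of_ord i).+1) * n) | i : 'I_t].

Lemma card_Iv m : #|` Iv m| = m.
Proof.
rewrite /Iv card_imfset /=; last by move=> i j /= [] /val_inj.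
by rewrite size_enum_ord.
Qed.

Lemma card_Xs n t : (0 < n)%N -> #|` Xs n t| = t.
Proof.
move=> n0; rewrite /Xs card_imfset /=; first by rewrite size_enum_ord.
move=> i j /= [] /eqP; rewrite eqn_pmul2r // eqn_pmul2l // eqSS => /eqP.
exact: val_inj.
Qed.

Lemma mem_Iv m x : reflect (exists2 i : nat, (i < m)%N & x = Posz i) (x \in Iv m).
Proof.
apply: (iffP (imfsetP _ _ _ _)) => [[i _ ->]|[i im ->]].
  by exists i.
by exists (Ordinal im).
Qed.

Lemma mem_Xs n t x : reflect (exists2 i : nat, (i < t)%N & x = Posz ((3 * i.+1) * n)) (x \in Xs n t).
Proof.
apply: (iffP (imfsetP _ _ _ _)) => [[i _ ->]|[i im ->]].
  by exists i.
by exists (Ordinal im).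
Qed.

Lemma card_A n t : (0 < n)%N -> (t <= n)%N -> #|` Iv (n - t) `|` Xs n t| = n.
Proof.
move=> n0 tn; rewrite cardfsU card_Iv card_Xs //.
have -> : Iv (n - t) `&` Xs n t = fset0.
  apply/fsetP => x; rewrite in_fsetI in_fset0.
  apply/negbTE/andP => [[/mem_Iv [i ilt ->] /mem_Xs [j _ /eqP]]].
  rewrite eqz_nat => /eqP ij; move: ilt; rewrite ij.
  have : (n <= (3 * j.+1) * n)%N by rewrite leq_pmull // muln_gt0.
  lia.
by rewrite cardfs0 subn0 subnK.
Qed.
Definition Ys (n t : nat) : {fset int} :=
  [fset Posz ((3 * (nat_of_ord p.1).+1) * n + nat_of_ord p.2) | p : 'I_t * 'I_n].

Lemma card_Ys n t : (0 < n)%N -> #|` Ys n t| = (t * n)%N.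
Proof.
move=> n0; rewrite /Ys card_imfset /=; first by rewrite -cardE card_prod !card_ord.
move=> [i j] [i' j'] /= [] E.
have Ed := congr1 (fun z => divn z n) E; have Em := congr1 (fun z => modn z n) E.
move: Ed Em => /=; rewrite !divnMDl // !modnMDl !divn_small // !modn_small //.
rewrite !addn0 => /eqP; rewrite eqn_pmul2l // eqSS => /eqP Ei /val_inj ->.
by rewrite (val_inj Ei).
Qed.

Lemma Ys_sub n t : Ys n t `<=` sumset (Iv (n - t) `|` Xs n t) (Iv n).
Proof.
apply/fsubsetP => z /imfsetP [[i j] _ ->] /=.
rewrite PoszD; apply: in_imfset2 => /=.
  by rewrite in_fsetU; apply/orP; right; apply/mem_Xs; exists i.
by apply/mem_Iv; exists j.
Qed.

Lemma upper n t (Bs : {fset int}) : Bs `<=` Iv n ->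
  sumset (Iv (n - t) `|` Xs n t) Bs `<=` Iv (2 * n) `|` sumset (Xs n t) Bs.
Proof.
move=> sB; apply/fsubsetP => z /imfset2P [x xA [y yB ->]].
rewrite in_fsetU; move: xA; rewrite /= in_fsetU => /orP [/mem_Iv [i ilt ->]|xX].
  have /mem_Iv [j jlt ->] := fsubsetP sB y yB.
  apply/orP; left; apply/mem_Iv; exists (i + j)%N; first lia.
  by rewrite PoszD.
by apply/orP; right; apply: in_imfset2.
Qed.

Lemma card_upper n t (Bs : {fset int}) : Bs `<=` Iv n ->
  (#|` sumset (Iv (n - t) `|` Xs n t) Bs| <= 2 * n + #|` Xs n t| * #|` Bs|)%N.
Proof.
move=> sB; apply: (leq_trans (fsubset_leq_card (upper n t Bs sB))).
apply: (leq_trans (leq_card_fsetU _ _)).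
by rewrite card_Iv leq_add2l card_sumset_le.
Qed.

Theorem proposition2p5 (R : realType) (s k : nat) (eps : R) :
  (0 < s)%N -> (0 < k)%N -> (0 < eps)%R -> (eps < 1)%R ->
  exists N : nat, forall n : nat, (N <= n)%N ->
    exists A B : {fset int},
      [/\ #|` A| = n, #|` B| = n,
          (k * n < #|` sumset A B|)%N &
          forall Bs : {fset int}, Bs `<=` B -> (#|` Bs| <= s)%N ->
            ((#|` sumset A Bs|)%:R <= (2 + eps) * n%:R :> R)%R].
Proof.
move=> s0 k0 e0 e1.
pose t := k.+1.
pose M := (Num.truncn (((t * s)%:R / eps)%R)).+1.
exists (maxn t M) => n; rewrite geq_max => /andP [tn Mn].
have n0 : (0 < n)%N by apply: leq_trans tn.
exists (Iv (n - t) `|` Xs n t), (Iv n); split.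
- exact: card_A.
- exact: card_Iv.
- apply: (leq_trans _ (fsubset_leq_card (Ys_sub n t))).
  by rewrite card_Ys // ltn_pmul2r.
- move=> Bs sB cB.
  have h1 := card_upper n t Bs sB.
  rewrite card_Xs // in h1.
  have h2 : (#|` sumset (Iv (n - t) `|` Xs n t) Bs| <= 2 * n + t * s)%N.
    by apply: (leq_trans h1); rewrite leq_add2l leq_mul2l cB orbT.
  apply: (le_trans (y := ((2 * n + t * s)%:R)%R)); first by rewrite ler_nat.
  have h3 : (((t * s)%:R / eps) < n%:R :> R)%R.
    apply: (lt_le_trans (truncnS_gt _)); rewrite ler_nat; exact: Mn.
  rewrite ltr_pdivrMr // in h3.
  rewrite (natrD _ (2 * n) (t * s)) (natrM _ 2 n).
  have -> : ((2 + eps) * n%:R = 2%:R * n%:R + n%:R * eps :> R)%R.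
    by rewrite mulrDl [(eps * _)%R]mulrC.
  apply: lerD => //.
  exact: ltW.
Qed.
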